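(* Let $(G,u,v,\alpha,\beta)$ be a Guvab. Then $W(\mu_k,\nu_k)\to0$ as $k\to\infty$ if and only if one of the following holds: (1) $0<\alpha\le\beta<1$; (2) $\alpha=\beta=1$ and $u=v$; (3) $G$ is not bipartite and $0=\alpha\le\beta<1$; (4) $\alpha=\beta=0$ and there exists a walk from $u$ to $v$ with an even number of steps.
   Context: A Guvab is a tuple $(G,u,v,\alpha,\beta)$ where $G$ is a finite, connected, simple graph, $u,v\in V(G)$, and $\alpha,\beta\in[0,1]$ with $\alpha\le\beta$. A random walk on $G$ with starting vertex $w$ and laziness $\gamma$ is the Markov chain $R_0=w$ and, for $i\ge1$, $R_i=R_{i-1}$ with probability $\gamma$ and $R_i=t$ with probability $\frac{1-\gamma}{\deg(R_{i-1})}$ for each neighbor $t$ of $R_{i-1}$. $\mu_k$ is the distribution after $k$ steps of the walk from $u$ with laziness $\alpha$, and $\nu_k$ that of the walk from $v$ with laziness $\beta$. $W(\mu,\nu)$ is the Wasserstein ($L^1$ optimal transport) distance with respect to the graph distance: the minimum over transportation plans (nonnegative $T$ on $V(G)\times V(G)$ with marginals $\mu,\nu$) of $\sum d(w_1,w_2)T(w_1,w_2)$. *)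

(* Defs.v *)
From HB Require Import structures.
From mathcomp Require Import all_boot all_order all_algebra.
From mathcomp Require Import all_classical all_reals.
From mathcomp Require Import topology normedtype sequences.
Set Implicit Arguments. Unset Strict Implicit. Unset Printing Implicit Defensive.
Import Order.TTheory GRing.Theory Num.Theory.
Local Open Scope ring_scope.

Section Guvab.
Variable V : finType.
Variable e : rel V.

Definition simple_graph : Prop := symmetric e /\ irreflexive e.

Definition walk_len (x y : V) (n : nat) : bool :=
  [exists p : n.-tuple V, path e x p && (last x p == y)].

Definition connected_graph : Prop := forall x y : V, exists n, walk_len x y n.

Definition bipartite : Prop :=
  exists f : V -> bool, forall x y, e x y -> f x != f y.

(* graph distance: length of a shortest walk (walks of length < #|V| suffice
   in a connected graph) *)
Definition gdist (x y : V) : nat := find (walk_len x y) (iota 0 #|V|).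

Variable R : realType.

Definition deg (x : V) : nat := #|[set y | e x y]|.

Definition trans (g : R) (x y : V) : R :=
  (if x == y then g else 0) + (if e x y then (1 - g) / (deg x)%:R else 0).

Fixpoint walk_dist (g : R) (w : V) (k : nat) : V -> R :=
  match k with
  | 0 => fun y => if y == w then 1 else 0
  | k'.+1 => fun y => \sum_(x : V) walk_dist g w k' x * trans g x y
  end.

Definition transport_plan (mu nu : V -> R) (P : V -> V -> R) : Prop :=
  (forall x y, 0 <= P x y) /\
  (forall x, \sum_(y : V) P x y = mu x) /\
  (forall y, \sum_(x : V) P x y = nu y).

Definition transport_cost (P : V -> V -> R) : R :=
  \sum_(x : V) \sum_(y : V) (gdist x y)%:R * P x y.

Definition wasserstein (mu nu : V -> R) : R :=
  inf [set c : R | exists P, transport_plan mu nu P /\ c = transport_cost P].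

End Guvab.

(* Main.v *)
Require Import Defs.
From HB Require Import structures.
From mathcomp Require Import all_boot all_order all_algebra.
From mathcomp Require Import all_classical all_reals.
From mathcomp Require Import topology normedtype sequences.
Import Order.TTheory GRing.Theory Num.Theory numFieldNormedType.Exports.
Local Open Scope classical_set_scope.
Local Open Scope ring_scope.
Set Implicit Arguments. Unset Strict Implicit. Unset Printing Implicit Defensive.
From mathcomp Require Import ring lra zify.

Lemma ev_cvg (R : realType) (W : nat -> R) :
  (forall eta : R, 0 < eta -> exists N, forall k, (N <= k)%N -> `|W k| <= eta) <->
  (W @ \oo --> (0 : R)).
Proof.
rewrite cvgrPdist_le; split.
- move=> H eps eps0; have [N HN] := H _ eps0; exists N => // k /= Hk.
  by rewrite sub0r normrN; apply: HN.
- move=> H eta eta0; have [N _ HN] := H _ eta0; exists N => k Hk.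
  by have := HN k Hk; rewrite /= sub0r normrN.
Qed.

Lemma geo (R : realType) (c eta : R) : 0 <= c -> c < 1 -> 0 < eta ->
  exists J, forall j, (J <= j)%N -> c ^+ j <= eta.
Proof.
move=> c0 c1 eta0.
have c1' : `|c| < 1 by rewrite ger0_norm.
have /ev_cvg H := cvg_expr c1'.
have [N HN] := H _ eta0; exists N => j Hj.
by have := HN _ Hj; rewrite ger0_norm // exprn_ge0.
Qed.

Section Walks.
Variable V : finType.
Variable e : rel V.

Lemma wl0 x y : walk_len e x y 0 = (x == y).
Proof.
apply/existsP/idP => [[p /andP[_ /eqP <-]]|/eqP <-].
  by rewrite tuple0.
by exists [tuple]; rewrite /= eqxx.
Qed.

Lemma wlS x y n : walk_len e x y n.+1 = [exists z, e x z && walk_len e z y n].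
Proof.
apply/existsP/existsP => [[p]|[z /andP[exz /existsP[p /andP[pp lp]]]]].
  case/tupleP: p => z p /= /andP[/andP[exz pp] lp].
  by exists z; rewrite exz; apply/existsP; exists p; rewrite pp.
by exists [tuple of z :: p]; rewrite /= exz pp.
Qed.

Lemma wl1 x y : walk_len e x y 1 = e x y.
Proof.
rewrite wlS; apply/existsP/idP => [[z /andP[exz]]|exy].
  by rewrite wl0 => /eqP <-.
by exists y; rewrite exy wl0 eqxx.
Qed.

Lemma wl_cat x y z a b : walk_len e x y a -> walk_len e y z b ->
  walk_len e x z (a + b).
Proof.
elim: a x => [|a IH] x.
  by rewrite wl0 => /eqP ->.
rewrite wlS => /existsP[w /andP[exw hw]] hb.
rewrite addSn wlS; apply/existsP; exists w; rewrite exw /=.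
exact: IH.
Qed.

Hypothesis esym : symmetric e.

Lemma wl_rev x y n : walk_len e x y n -> walk_len e y x n.
Proof.
elim: n x y => [|n IH] x y.
  by rewrite !wl0 eq_sym.
rewrite wlS => /existsP[z /andP[exz hz]].
rewrite -addn1; apply: (wl_cat (IH _ _ hz)).
by rewrite wl1 esym.
Qed.

Lemma wl_even x y a t : walk_len e x y a -> (exists w, e y w) ->
  walk_len e x y (a + t.*2).
Proof.
move=> h [w eyw]; elim: t => [|t IH]; first by rewrite addn0.
rewrite doubleS -addn2 addnA; apply: (wl_cat IH).
rewrite (_ : 2 = 1 + 1)%N //; apply: (@wl_cat _ w); rewrite wl1 //.
by rewrite esym.
Qed.

Lemma wl_parity (f : V -> bool) : (forall x y, e x y -> f x != f y) ->
  forall x y n, walk_len e x y n -> f y = f x (+) odd n.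
Proof.
move=> hf x y n; elim: n x => [|n IH] x.
  by rewrite wl0 => /eqP ->; rewrite addbF.
rewrite wlS => /existsP[z /andP[exz hz]].
rewrite (IH _ hz) /=; have := hf _ _ exz.
by case: (f x); case: (f z); case: (odd n).
Qed.

End Walks.
Section Osc.
Variable R : realType.
Variable V : finType.

Lemma exists_min (S : pred V) z0 (h : V -> R) : z0 \in S ->
  exists2 zm, zm \in S & forall z, z \in S -> h zm <= h z.
Proof.
move=> hz0; case: (arg_minP (P := fun z => z \in S) h hz0) => zm hzm hmin.
by exists zm.
Qed.

Lemma osc (S : pred V) z0 (Q1 Q2 h : V -> R) eps D :
 z0 \in S -> (forall z, 0 <= Q1 z) -> (forall z, 0 <= Q2 z) ->
 \sum_z Q1 z = 1 -> \sum_z Q2 z = 1 ->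
 (forall z, z \notin S -> Q1 z = 0) -> (forall z, z \notin S -> Q2 z = 0) ->
 eps <= Q1 z0 -> eps <= Q2 z0 ->
 (forall z z', z \in S -> z' \in S -> `|h z - h z'| <= D) ->
 `|\sum_z Q1 z * h z - \sum_z Q2 z * h z| <= (1 - eps) * D.
Proof.
move=> hz0 Q1p Q2p Q1s Q2s Q1o Q2o e1 e2 hD.
have [zm zmS zmin] := exists_min h hz0.
pose c := h zm.
pose del z : R := if z == z0 then eps else 0.
have sdel : forall F : V -> R, \sum_z del z * F z = eps * F z0.
  move=> F; rewrite (bigD1 z0) //= /del eqxx big1 ?addr0 // => z /negbTE ->.
  by rewrite mul0r.
have key : forall Q : V -> R, (forall z, 0 <= Q z) -> \sum_z Q z = 1 ->
    (forall z, z \notin S -> Q z = 0) -> eps <= Q z0 ->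
    exists2 X, \sum_z Q z * h z = X + eps * (h z0 - c) + c &
       0 <= X <= (1 - eps) * D.
  move=> Q Qp Qs Qo eQ.
  exists (\sum_z (Q z - del z) * (h z - c)).
    have -> : \sum_z (Q z - del z) * (h z - c) =
       \sum_z Q z * h z - c * \sum_z Q z - \sum_z del z * (h z - c).
      rewrite mulr_sumr -!sumrB; apply: eq_bigr => z _; ring.
    by rewrite sdel Qs; ring.
  have hw : forall z, 0 <= Q z - del z /\ (Q z - del z = 0 \/ z \in S).
    move=> z; rewrite /del; case: eqP => [->|nz].
      by split; [rewrite subr_ge0|right].
    rewrite subr0; split=> //; case: (boolP (z \in S)) => zS; first by right.
    by left; apply: Qo.
  have hsw : \sum_z (Q z - del z) = 1 - eps.
    rewrite sumrB Qs; congr (_ - _).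
    by have := sdel (fun _ => 1); under eq_bigr do rewrite mulr1; rewrite mulr1.
  apply/andP; split.
    apply: sumr_ge0 => z _; have [w0 [->|zS]] := hw z; first by rewrite mul0r.
    by apply: mulr_ge0 => //; rewrite subr_ge0 zmin.
  rewrite -hsw mulr_suml; apply: ler_sum => z _.
  have [w0 [->|zS]] := hw z; first by rewrite !mul0r.
  apply: ler_wpM2l => //.
  have := hD z zm zS zmS; rewrite ler_norml => /andP[_ ->] //.
have [X1 -> /andP[X10 X1D]] := key Q1 Q1p Q1s Q1o e1.
have [X2 -> /andP[X20 X2D]] := key Q2 Q2p Q2s Q2o e2.
rewrite ler_norml; apply/andP; split; lra.
Qed.
End Osc.
Section Gd.
Variable V : finType.
Variable e : rel V.

Lemma gdist_refl x : gdist e x x = 0%N.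
Proof.
rewrite /gdist; have : (0 < #|V|)%N by apply/card_gt0P; exists x.
by case: #|V| => // n _; rewrite /= wl0 eqxx.
Qed.

Lemma gdist_ge1 x y : x != y -> (1 <= gdist e x y)%N.
Proof.
rewrite /gdist; have : (0 < #|V|)%N by apply/card_gt0P; exists x.
by case: #|V| => // n _ nxy; rewrite /= wl0 (negbTE nxy).
Qed.

Lemma gdist_le x y : (gdist e x y <= #|V|)%N.
Proof. by rewrite /gdist; apply: leq_trans (find_size _ _) _; rewrite size_iota. Qed.
End Gd.

Section Markov.
Variable R : realType.
Variable V : finType.
Variable e : rel V.
Hypothesis esym : symmetric e.
Hypothesis eirr : irreflexive e.
Hypothesis econn : connected_graph e.
Hypothesis hcard : (1 < #|V|)%N.

Lemma neighbor x : exists y, e x y.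
Proof.
have [y nxy] : exists y, y != x.
  apply/existsP; move: hcard; rewrite (cardD1 x) ltnS => /card_gt0P[y].
  by rewrite !inE => /andP[nyx _]; apply/existsP; exists y.
have [n] := econn x y; case: n => [|n]; first by rewrite wl0 eq_sym (negbTE nxy).
by rewrite wlS => /existsP[z /andP[exz _]]; exists z.
Qed.

Lemma deg_gt0 x : (0 < deg e x)%N.
Proof. by have [y exy] := neighbor x; apply/card_gt0P; exists y; rewrite inE. Qed.

Lemma sum_edge x (c : R) : \sum_y (if e x y then c else 0) = c * (deg e x)%:R.
Proof.
rewrite -big_mkcond /= sumr_const /deg cardsE mulr_natr.
by congr (_ *+ _); apply: eq_card => y; rewrite !inE.
Qed.

Variable g : R.
Hypothesis g0 : 0 <= g.
Hypothesis g1 : g <= 1.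

Lemma trans_ge0 x y : 0 <= trans e g x y.
Proof.
rewrite /trans; apply: addr_ge0; first by case: (x == y).
case: (e x y) => //; apply: divr_ge0 => //; by rewrite subr_ge0.
Qed.

Lemma trans_sum x : \sum_y trans e g x y = 1.
Proof.
rewrite big_split /= sum_edge.
rewrite (bigD1 x) //= eqxx big1 => [|y /negbTE]; last by rewrite eq_sym => ->.
rewrite addr0 divfK; first by rewrite addrC subrK.
by rewrite pnatr_eq0 -lt0n deg_gt0.
Qed.

Lemma wd_ge0 w k y : 0 <= walk_dist e g w k y.
Proof.
elim: k y => [|k IH] y /=; first by case: (y == w).
by apply: sumr_ge0 => x _; apply: mulr_ge0 => //; apply: trans_ge0.
Qed.

Lemma wd_sum w k : \sum_y walk_dist e g w k y = 1.
Proof.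
elim: k => [|k IH] /=.
  by rewrite (bigD1 w) //= eqxx big1 ?addr0 // => y /negbTE ->.
rewrite exchange_big /= -[RHS]IH; apply: eq_bigr => x _.
by rewrite -mulr_sumr trans_sum mulr1.
Qed.

Lemma wd_le1 w k y : walk_dist e g w k y <= 1.
Proof.
rewrite -(wd_sum w k) (bigD1 y) //= lerDl.
by apply: sumr_ge0 => z _; apply: wd_ge0.
Qed.

Lemma wd1 w y : walk_dist e g w 1 y = trans e g w y.
Proof.
rewrite /= (bigD1 w) //= eqxx mul1r big1 ?addr0 // => x /negbTE ->.
by rewrite mul0r.
Qed.

Lemma wd_CK w a b y : walk_dist e g w (a + b) y =
  \sum_x walk_dist e g w a x * walk_dist e g x b y.
Proof.
elim: b y => [|b IH] y.
  rewrite addn0 /= (bigD1 y) //= eqxx mulr1 big1 ?addr0 // => x nxy.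
  by rewrite eq_sym (negbTE nxy) mulr0.
rewrite addnS /=.
under eq_bigr do rewrite IH mulr_suml.
rewrite exchange_big /=; apply: eq_bigr => x _.
by rewrite mulr_sumr; apply: eq_bigr => z _; rewrite mulrA.
Qed.

Lemma sum_gt0 (F : V -> R) j : (forall i, 0 <= F i) -> 0 < F j -> 0 < \sum_i F i.
Proof.
move=> h hj; rewrite (bigD1 j) //=; apply: (lt_le_trans hj).
by rewrite lerDl; apply: sumr_ge0.
Qed.

Lemma wd_pos_walk x y n : g < 1 -> walk_len e x y n -> 0 < walk_dist e g x n y.
Proof.
move=> glt1; elim: n x => [|n IH] x.
  by rewrite wl0 => /eqP ->; rewrite /= eqxx.
rewrite wlS => /existsP[z /andP[exz hz]].
rewrite -add1n wd_CK; apply: (@sum_gt0 _ z).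
  by move=> i; apply: mulr_ge0; apply: wd_ge0.
apply: mulr_gt0; last exact: IH.
rewrite wd1 /trans exz; apply: ltr_wpDl; first by case: (x == z).
by apply: divr_gt0; rewrite ?subr_gt0 // ltr0n deg_gt0.
Qed.

Lemma wd_lazy x y n : 0 < g -> 0 < walk_dist e g x n y -> 0 < walk_dist e g x n.+1 y.
Proof.
move=> gpos h /=; apply: (@sum_gt0 _ y).
  by move=> i; apply: mulr_ge0; [apply: wd_ge0|apply: trans_ge0].
apply: mulr_gt0 => //; rewrite /trans eqxx eirr addr0 //.
Qed.

Lemma wd_lazy_le x y n m : 0 < g -> (n <= m)%N -> 0 < walk_dist e g x n y ->
  0 < walk_dist e g x m y.
Proof.
move=> gpos /subnK <-; elim: (m - n)%N => [|d IH] h; first by rewrite add0n.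
by rewrite addSn; apply: wd_lazy => //; apply: IH.
Qed.


Section Mix.
Variable S : pred V.
Variable z0 : V.
Variable M : nat.
Variable eps : R.
Hypothesis z0S : z0 \in S.
Hypothesis hout : forall x z, x \in S -> z \notin S -> walk_dist e g x M z = 0.
Hypothesis hpos : forall x, x \in S -> eps <= walk_dist e g x M z0.

Lemma mix_j j r x x' y : x \in S -> x' \in S ->
  `|walk_dist e g x (j * M + r) y - walk_dist e g x' (j * M + r) y| <= (1 - eps) ^+ j.
Proof.
elim: j x x' => [|j IH] x x' xS x'S.
  rewrite expr0 mul0n add0n ler_norml.
  have := wd_le1 x r y; have := wd_le1 x' r y.
  have := wd_ge0 x r y; have := wd_ge0 x' r y; move=> *.
  apply/andP; split; lra.
rewrite mulSn -addnA !wd_CK exprS.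
apply: (osc (S := S) (z0 := z0)) => //.
all: first [ by move=> z; apply: wd_ge0 | exact: wd_sum | by move=> z; apply: hout
           | exact: hpos | by move=> z z' zS z'S; apply: IH ].
Qed.

Lemma mix_k k x x' y : x \in S -> x' \in S ->
  `|walk_dist e g x k y - walk_dist e g x' k y| <= (1 - eps) ^+ (k %/ M).
Proof. by move=> xS x'S; rewrite {1 2}(divn_eq k M); apply: mix_j. Qed.

End Mix.

Lemma mix_ev (S : pred V) z0 M : (0 < M)%N -> z0 \in S ->
  (forall x z, x \in S -> z \notin S -> walk_dist e g x M z = 0) ->
  (forall x, x \in S -> 0 < walk_dist e g x M z0) ->
  forall eta, 0 < eta -> exists N, forall k, (N <= k)%N -> forall x x' y,
    x \in S -> x' \in S ->
    `|walk_dist e g x k y - walk_dist e g x' k y| <= eta.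
Proof.
move=> M0 z0S hout hpos eta eta0.
have [xm xmS xmin] := exists_min (fun x => walk_dist e g x M z0) z0S.
pose eps := walk_dist e g xm M z0.
have eps0 : 0 < eps by apply: hpos.
have eps1 : eps <= 1 by apply: wd_le1.
have [J HJ] := @geo R (1 - eps) eta ltac:(lra) ltac:(lra) eta0.
exists (J * M)%N => k Hk x x' y xS x'S.
have hp : forall x1, x1 \in S -> eps <= walk_dist e g x1 M z0.
  by move=> x1 x1S; apply: xmin.
apply: le_trans (@mix_k S z0 M eps z0S hout hp k x x' y xS x'S) _.
apply: HJ; rewrite -(mulnK J M0); exact: leq_div2r.
Qed.

Lemma le_sum_nat (F : V -> nat) x : (F x <= \sum_y F y)%N.
Proof. by rewrite (bigD1 x) //= leq_addr. Qed.

Lemma wl_ext x z0 a n : walk_len e x z0 a -> (a <= n)%N -> ~~ odd (n - a) ->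
  walk_len e x z0 n.
Proof.
move=> h an hodd.
have -> : n = (a + (n - a)./2.*2)%N.
  have := odd_double_half (n - a); rewrite (negbTE hodd) /=; lia.
exact: (@wl_even V e esym x z0 a ((n - a)./2) h (neighbor z0)).
Qed.

Lemma odd_cycle z0 : ~ bipartite e -> exists2 L, odd L & walk_len e z0 z0 L.
Proof.
move=> nb; case: (pselect (exists2 L, odd L & walk_len e z0 z0 L)) => // H.
exfalso; apply: nb.
exists (fun x => odd (xchoose (econn z0 x))) => x y exy.
have ha := xchooseP (econn z0 x); have hb := xchooseP (econn z0 y).
set a := xchoose (econn z0 x) in ha *; set b := xchoose (econn z0 y) in hb *.
have hc : walk_len e z0 z0 (a + 1 + b).
  apply: wl_cat (wl_rev esym hb); apply: wl_cat ha _; by rewrite wl1.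
have : ~~ odd (a + 1 + b) by apply/negP => ho; apply: H; exists (a + 1 + b).
by rewrite !oddD /=; case: (odd a); case: (odd b).
Qed.

Definition alen z0 x := xchoose (econn x z0).

Lemma alenP z0 x : walk_len e x z0 (alen z0 x).
Proof. exact: xchooseP. Qed.

Lemma pos_lazy z0 : 0 < g -> g < 1 ->
  exists2 M, (0 < M)%N & forall x, 0 < walk_dist e g x M z0.
Proof.
move=> gp gl; exists (\sum_y alen z0 y).+1 => // x.
apply: (@wd_lazy_le _ _ (alen z0 x)) => //.
  by apply: leq_trans (le_sum_nat _ x) _.
exact: wd_pos_walk (alenP z0 x).
Qed.

Lemma pos_nonbip z0 : g < 1 -> ~ bipartite e ->
  exists2 M, (0 < M)%N & forall x, 0 < walk_dist e g x M z0.
Proof.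
move=> gl nb; have [L oL hL] := odd_cycle z0 nb.
have L0 : (0 < L)%N by case: L oL {hL}.
exists (L + \sum_y alen z0 y)%N; first by rewrite addn_gt0 L0.
move=> x; apply: wd_pos_walk => //.
have hs := le_sum_nat (alen z0) x.
case: (boolP (odd (L + \sum_y alen z0 y - alen z0 x))) => hp.
  apply: (@wl_ext _ _ (alen z0 x + L)).
  - exact: wl_cat (alenP z0 x) hL.
  - by rewrite addnC leq_add2l.
  - rewrite subnDA oddB ?hp ?oL //. 
    lia.
apply: (@wl_ext _ _ (alen z0 x)) => //; first exact: alenP.
by rewrite (leq_trans hs) // leq_addl.
Qed.

Lemma pos_bip (f : V -> bool) z0 : g < 1 -> (forall x y, e x y -> f x != f y) ->
  exists2 M, (0 < M)%N /\ ~~ odd M &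
    forall x, f x = f z0 -> 0 < walk_dist e g x M z0.
Proof.
move=> gl hf; exists ((\sum_y alen z0 y).+1.*2); first by rewrite odd_double.
move=> x fx; apply: wd_pos_walk => //.
have hs := le_sum_nat (alen z0) x.
have ha := alenP z0 x.
have hpa : odd (alen z0 x) = false.
  by have := wl_parity hf ha; rewrite fx; case: (f z0); case: (odd _).
apply: (@wl_ext _ _ (alen z0 x)) => //.
  rewrite -addnn; lia.
rewrite oddB ?odd_double ?hpa //.
rewrite -addnn; lia.
Qed.

Definition Dsum : R := \sum_z (deg e z)%:R.
Definition pi x : R := (deg e x)%:R / Dsum.

Lemma Dsum_gt0 : 0 < Dsum.
Proof.
have [x _] : exists x : V, x \in V by apply/card_gt0P; apply: ltn_trans hcard.
by apply: (@sum_gt0 _ x) => [i|]; rewrite ?ler0n ?ltr0n ?deg_gt0.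
Qed.

Lemma pi_ge0 x : 0 <= pi x.
Proof. by apply: divr_ge0; rewrite ?ler0n // ltW // Dsum_gt0. Qed.

Lemma pi_gt0 x : 0 < pi x.
Proof. by apply: divr_gt0; rewrite ?ltr0n ?deg_gt0 // Dsum_gt0. Qed.

Lemma pi_sum : \sum_x pi x = 1.
Proof. by rewrite -mulr_suml divff // gt_eqF // Dsum_gt0. Qed.

Lemma pi_stat y : \sum_x pi x * trans e g x y = pi y.
Proof.
have D0 : Dsum != 0 by rewrite gt_eqF // Dsum_gt0.
rewrite /trans; under eq_bigr do rewrite mulrDr.
rewrite big_split /= (bigD1 y) //= eqxx big1 ?addr0; last first.
  by move=> x /negbTE ->; rewrite mulr0.
have -> : \sum_x pi x * (if e x y then (1 - g) / (deg e x)%:R else 0) =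
          \sum_x (if e y x then (1 - g) / Dsum else 0).
  apply: eq_bigr => x _; rewrite esym; case: (e y x); rewrite ?mulr0 //.
  have dx : (deg e x)%:R != 0 :> R by rewrite pnatr_eq0 -lt0n deg_gt0.
  by rewrite /pi; field; rewrite D0 dx.
by rewrite sum_edge /pi; field.
Qed.

Lemma wd_pi k y : \sum_x pi x * walk_dist e g x k y = pi y.
Proof.
elim: k y => [|k IH] y /=.
  rewrite (bigD1 y) //= eqxx mulr1 big1 ?addr0 // => x nxy.
  by rewrite eq_sym (negbTE nxy) mulr0.
under eq_bigr do rewrite mulr_sumr.
rewrite exchange_big /= -[RHS]pi_stat; apply: eq_bigr => z _.
by rewrite -IH mulr_suml; apply: eq_bigr => x _; rewrite mulrA.
Qed.

Lemma mix_pi w : g < 1 -> (0 < g \/ ~ bipartite e) ->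
  forall eta, 0 < eta -> exists N, forall k, (N <= k)%N -> forall y,
    `|walk_dist e g w k y - pi y| <= eta.
Proof.
move=> gl hg eta eta0.
have [M M0 hM] : exists2 M, (0 < M)%N & forall x, 0 < walk_dist e g x M w.
  by case: hg => [gp|nb]; [apply: pos_lazy | apply: pos_nonbip].
have [N HN] := @mix_ev predT w M M0 isT (fun _ _ _ h => False_ind _ (negP h isT))
  (fun x _ => hM x) eta eta0.
exists N => k Hk y.
have -> : walk_dist e g w k y - pi y =
    \sum_x pi x * (walk_dist e g w k y - walk_dist e g x k y).
  under eq_bigr do rewrite mulrBr.
  by rewrite sumrB wd_pi -mulr_suml pi_sum mul1r.
apply: le_trans (ler_norm_sum _ _ _) _.
rewrite -[eta]mul1r -pi_sum mulr_suml; apply: ler_sum => x _.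
rewrite normrM ger0_norm ?pi_ge0 //; apply: ler_wpM2l; first exact: pi_ge0.
exact: HN.
Qed.

Lemma wd_support (hg : g = 0) (f : V -> bool) :
  (forall x y, e x y -> f x != f y) ->
  forall x k y, walk_dist e g x k y != 0 -> f y = f x (+) odd k.
Proof.
move=> hf x k; elim: k => [|k IH] y /=.
  by case: (y =P x) => [->|_]; rewrite ?addbF // eqxx.
have [/existsP[z /andP[h1 h2]] _|/existsPn hn] :=
  boolP [exists z, (walk_dist e g x k z != 0) && (trans e g z y != 0)].
  have ezy : e z y.
    move: h2; rewrite /trans hg; case: (e z y) => //.
    by case: (z == y); rewrite addr0 eqxx.
  move: (IH _ h1) (hf _ _ ezy) => /=.
  by case: (f z); case: (f y); case: (f x); case: (odd k).
rewrite big1 ?eqxx // => z _; have := hn z; rewrite negb_and !negbK.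
by case/orP => /eqP ->; rewrite ?mul0r ?mulr0.
Qed.

Lemma mix_bip (hg : g = 0) (f : V -> bool) u v :
  (forall x y, e x y -> f x != f y) -> f u = f v ->
  forall eta, 0 < eta -> exists N, forall k, (N <= k)%N -> forall y,
    `|walk_dist e g u k y - walk_dist e g v k y| <= eta.
Proof.
move=> hf fuv eta eta0.
have gl : g < 1 by rewrite hg ltr01.
have [M [M0 Me] hM] := pos_bip u gl hf.
pose S := [pred x | f x == f u].
have uS : u \in S by rewrite inE eqxx.
have hout : forall x z, x \in S -> z \notin S -> walk_dist e g x M z = 0.
  move=> x z; rewrite !inE => /eqP fx fz; apply/eqP; apply: contraNT fz => h.
  by rewrite (wd_support hg hf h) (negbTE Me) addbF fx.
have [N HN] := @mix_ev S u M M0 uS hout (fun x xS => hM x (eqP xS)) eta eta0.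
exists N => k Hk y; apply: HN => //; by rewrite inE fuv.
Qed.
End Markov.

Section Wass.
Variable R : realType.
Variable V : finType.
Variable e : rel V.
Variables mu nu : V -> R.
Hypothesis mu0 : forall x, 0 <= mu x.
Hypothesis nu0 : forall x, 0 <= nu x.
Hypothesis mu1 : \sum_x mu x = 1.
Hypothesis nu1 : \sum_x nu x = 1.

Let dd x y : R := (gdist e x y)%:R.

Lemma le_sumF (F : V -> R) j : (forall i, 0 <= F i) -> F j <= \sum_i F i.
Proof. by move=> h; rewrite (bigD1 j) //= lerDl; apply: sumr_ge0. Qed.

Lemma row_le P x : transport_plan mu nu P ->
  \sum_(b | b != x) P x b <= transport_cost e P.
Proof.
move=> [P0 _].
have h1 : \sum_(b | b != x) P x b <= \sum_b dd x b * P x b.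
  rewrite [X in _ <= X](bigD1 x) //= -[X in X <= _]add0r lerD //.
    by apply: mulr_ge0 => //; rewrite ler0n.
  apply: ler_sum => b nbx; rewrite -[X in X <= _]mul1r ler_wpM2r //.
  by rewrite /dd ler1n gdist_ge1 // eq_sym.
apply: (le_trans h1); rewrite /transport_cost.
apply: (le_sumF (F := fun a => \sum_b dd a b * P a b) x).
by move=> a; apply: sumr_ge0 => b _; apply: mulr_ge0 => //; rewrite ler0n.
Qed.

Lemma col_le P x : transport_plan mu nu P ->
  \sum_(a | a != x) P a x <= transport_cost e P.
Proof.
move=> [P0 _].
have h1 : \sum_(a | a != x) P a x <= \sum_a dd a x * P a x.
  rewrite [X in _ <= X](bigD1 x) //= -[X in X <= _]add0r lerD //.
    by apply: mulr_ge0 => //; rewrite ler0n.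
  apply: ler_sum => b nbx; rewrite -[X in X <= _]mul1r ler_wpM2r //.
  by rewrite /dd ler1n gdist_ge1.
apply: (le_trans h1); rewrite /transport_cost exchange_big /=.
apply: (le_sumF (F := fun b => \sum_a dd a b * P a b) x).
by move=> a; apply: sumr_ge0 => b _; apply: mulr_ge0 => //; rewrite ler0n.
Qed.

Lemma cost_ge P x : transport_plan mu nu P -> `|mu x - nu x| <= transport_cost e P.
Proof.
move=> hP; have hA := row_le x hP; have hB := col_le x hP.
case: hP => [P0 [Pm Pn]].
have A0 : 0 <= \sum_(b | b != x) P x b by apply: sumr_ge0.
have B0 : 0 <= \sum_(a | a != x) P a x by apply: sumr_ge0.
rewrite -Pm -Pn (bigD1 x) //= [X in _ - X](bigD1 x) //=.
rewrite ler_norml; apply/andP; split; lra.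
Qed.

Let E := [set c : R | exists P, transport_plan mu nu P /\ c = transport_cost e P].

Lemma prod_plan : transport_plan mu nu (fun x y => mu x * nu y).
Proof.
split; first by move=> x y; apply: mulr_ge0.
split=> [x|y]; first by rewrite -mulr_sumr nu1 mulr1.
by rewrite -mulr_suml mu1 mul1r.
Qed.

Lemma cost_ge0 P : transport_plan mu nu P -> 0 <= transport_cost e P.
Proof.
move=> [P0 _]; apply: sumr_ge0 => x _; apply: sumr_ge0 => y _.
by apply: mulr_ge0 => //; rewrite ler0n.
Qed.


Lemma W_lower x : `|mu x - nu x| <= wasserstein e mu nu.
Proof.
apply: lb_le_inf.
  by exists (transport_cost e (fun x y => mu x * nu y)); exists (fun x y => mu x * nu y); split => //; exact: prod_plan.
by move=> c [P [hP ->]]; apply: cost_ge.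
Qed.

Lemma W_le_cost P : transport_plan mu nu P -> wasserstein e mu nu <= transport_cost e P.
Proof.
move=> hP; apply: (ge_inf (E := E)); last by exists P.
by exists 0 => c [Q [hQ ->]]; apply: cost_ge0.
Qed.

Lemma W_ge0 : 0 <= wasserstein e mu nu.
Proof.
apply: lb_le_inf.
  by exists (transport_cost e (fun x y => mu x * nu y)); exists (fun x y => mu x * nu y); split => //; exact: prod_plan.
by move=> c [P [hP ->]]; apply: cost_ge0.
Qed.

Let m x := if mu x <= nu x then mu x else nu x.
Let s := \sum_x (mu x - m x).

Lemma m_ge0 x : 0 <= m x.
Proof. by rewrite /m; case: ifP. Qed.
Lemma mu_m x : 0 <= mu x - m x.
Proof. by rewrite /m subr_ge0; case: ifP => // /negbT; rewrite -ltNge => /ltW. Qed.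
Lemma nu_m x : 0 <= nu x - m x.
Proof. by rewrite /m subr_ge0; case: ifP. Qed.
Lemma s_nu : \sum_x (nu x - m x) = s.
Proof. by rewrite /s !sumrB mu1 nu1. Qed.
Lemma s_ge0 : 0 <= s.
Proof. by apply: sumr_ge0 => x _; apply: mu_m. Qed.

Lemma div_fix (a : R) (F : V -> R) : (forall x, 0 <= F x) -> \sum_x F x = s -> forall x,
  F x * s / s = F x.
Proof.
move=> F0 Fs x; have [s0|s0] := eqVneq s 0; last by rewrite mulfK.
rewrite s0 mulr0 mul0r; apply/esym; move: Fs; rewrite s0 => Fs.
by apply: (psumr_eq0P _ Fs) => // i _; apply: F0.
Qed.

Definition plan x y := (if x == y then m x else 0) + (mu x - m x) * (nu y - m y) / s.

Lemma plan_ok : transport_plan mu nu plan.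
Proof.
split.
  move=> x y; apply: addr_ge0; first by case: ifP => // _; apply: m_ge0.
  by apply: divr_ge0; [apply: mulr_ge0; [apply: mu_m|apply: nu_m]|apply: s_ge0].
split=> [x|y].
  rewrite big_split /= (bigD1 x) //= eqxx big1 ?addr0; last first.
    by move=> y /negbTE; rewrite eq_sym => ->.
  rewrite -mulr_suml -mulr_sumr s_nu (@div_fix 0 (fun x => mu x - m x)) //.
    by rewrite addrC subrK.
  exact: mu_m.
rewrite big_split /= (bigD1 y) //= eqxx big1 ?addr0; last first.
  by move=> x /negbTE ->.
rewrite -mulr_suml -mulr_suml -/s [s * _]mulrC (@div_fix 0 (fun x => nu x - m x)) //.
  by rewrite addrC subrK.
  exact: nu_m.
exact: s_nu.
Qed.

Lemma s_le : s <= \sum_x `|mu x - nu x|.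
Proof.
apply: ler_sum => x _; rewrite /m; case: ifP => h.
  by rewrite subrr normr_ge0.
exact: ler_norm.
Qed.

Lemma W_upper : wasserstein e mu nu <= (#|V|)%:R * \sum_x `|mu x - nu x|.
Proof.
apply: le_trans (W_le_cost plan_ok) _.
apply: le_trans (_ : _ <= (#|V|)%:R * s) _; last first.
  by apply: ler_wpM2l; [rewrite ler0n | apply: s_le].
rewrite /transport_cost.
have -> : (#|V|)%:R * s = \sum_x \sum_y (#|V|)%:R * ((mu x - m x) * (nu y - m y) / s).
  under eq_bigr => x _ do rewrite -mulr_sumr.
  rewrite -mulr_sumr; congr (_ * _).
  under eq_bigr => x _ do rewrite -mulr_suml -mulr_sumr s_nu.
  rewrite -mulr_suml -mulr_suml -/s.
  have [s0|s0] := eqVneq s 0; first by rewrite s0 !mul0r.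
  by rewrite mulfK.
apply: ler_sum => x _; apply: ler_sum => y _; rewrite /plan mulrDr.
have T0 : 0 <= (mu x - m x) * (nu y - m y) / s.
  by apply: divr_ge0; [apply: mulr_ge0; [apply: mu_m|apply: nu_m]|apply: s_ge0].
have -> : (gdist e x y)%:R * (if x == y then m x else 0) = 0 :> R.
  by case: eqP => [->|]; rewrite ?gdist_refl ?mul0r ?mulr0.
rewrite add0r; apply: ler_wpM2r => //; rewrite ler_nat; exact: gdist_le.
Qed.
End Wass.

Section Main.
Variable R : realType.
Variable V : finType.
Variable e : rel V.
Hypothesis esym : symmetric e.
Hypothesis eirr : irreflexive e.
Hypothesis econn : connected_graph e.
Hypothesis hcard : (1 < #|V|)%N.
Variables (u v : V) (alpha beta : R).
Hypothesis a0 : 0 <= alpha.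
Hypothesis ab : alpha <= beta.
Hypothesis b1 : beta <= 1.

Lemma b0 : 0 <= beta. Proof. exact: le_trans a0 ab. Qed.
Lemma a1 : alpha <= 1. Proof. exact: le_trans ab b1. Qed.

Let mu k := walk_dist e alpha u k.
Let nu k := walk_dist e beta v k.

Definition Close := forall eta : R, 0 < eta -> exists N, forall k, (N <= k)%N ->
  forall y, `|mu k y - nu k y| <= eta.

Lemma mu_ge0 k y : 0 <= mu k y. Proof. exact: (wd_ge0 e a0 a1). Qed.
Lemma nu_ge0 k y : 0 <= nu k y. Proof. exact: (wd_ge0 e b0 b1). Qed.
Lemma mu_sum k : \sum_y mu k y = 1. Proof. exact: wd_sum. Qed.
Lemma nu_sum k : \sum_y nu k y = 1. Proof. exact: wd_sum. Qed.

Lemma close_W : Close -> (fun k => wasserstein e (mu k) (nu k)) @ \oo --> (0 : R).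
Proof.
move=> hc; apply/ev_cvg => eta eta0.
pose c : R := (#|V|)%:R.
have c0 : 0 < c by rewrite ltr0n; apply: ltn_trans hcard.
have [N HN] := hc (eta / (c * c)) (divr_gt0 eta0 (mulr_gt0 c0 c0)).
exists N => k Hk.
rewrite ger0_norm; last exact: (W_ge0 e (@mu_ge0 k) (@nu_ge0 k) (mu_sum k) (nu_sum k)).
apply: le_trans (W_upper e (@mu_ge0 k) (@nu_ge0 k) (mu_sum k) (nu_sum k)) _.
apply: le_trans (_ : _ <= c * \sum_(y : V) (eta / (c * c))) _.
  apply: ler_wpM2l; first exact: ltW.
  by apply: ler_sum => y _; apply: HN.
rewrite sumr_const -/c -mulr_natr -/c.
have cn0 : c != 0 by rewrite gt_eqF.
by rewrite le_eqVlt; apply/orP; left; apply/eqP; field.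
Qed.

Lemma W_close : (fun k => wasserstein e (mu k) (nu k)) @ \oo --> (0 : R) -> Close.
Proof.
move/ev_cvg => h eta eta0; have [N HN] := h eta eta0; exists N => k Hk y.
apply: le_trans (W_lower e (@mu_ge0 k) (@nu_ge0 k) (mu_sum k) (nu_sum k) y) _.
exact: le_trans (ler_norm _) (HN k Hk).
Qed.


Lemma wd_one w k y : walk_dist e (1 : R) w k y = if y == w then 1 else 0.
Proof.
elim: k y => [|k IH] y //=.
under eq_bigr => x _ do rewrite IH.
rewrite (bigD1 w) //= eqxx mul1r big1 ?addr0; last first.
  by move=> x /negbTE ->; rewrite mul0r.
rewrite /trans subrr mul0r; case: (e w y); rewrite addr0 eq_sym //.
Qed.

Lemma step0 (ha : alpha = 0) k : mu k.+1 v <= 1 - mu k v.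
Proof.
have -> : 1 - mu k v = \sum_(x | x != v) mu k x.
  by rewrite -(mu_sum k) (bigD1 v) //= addrC addrK.
rewrite /mu /= -/(mu k) (bigD1 v) //= /trans eqxx eirr ha addr0 mulr0 add0r.
apply: ler_sum => x nxv; apply: ler_piMr; first exact: mu_ge0.
rewrite (negbTE nxv) add0r; case: (e x v) => //.
rewrite subr0 mul1r invf_le1 ?ler1n ?ltr0n; exact: deg_gt0.
Qed.

Lemma pi_lt1 y : pi R e y < 1.
Proof.
have [z eyz] := neighbor econn hcard y.
have nzy : z != y by apply: contraTneq eyz => ->; rewrite eirr.
rewrite -(pi_sum R econn hcard) (bigD1 y) //= ltrDl.
rewrite (bigD1 z) //=; apply: ltr_wpDr; first by apply: sumr_ge0 => x _; apply: ltW; apply: pi_gt0.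
exact: pi_gt0.
Qed.

Lemma main_equiv : Close <->
  [\/ 0 < alpha /\ beta < 1,
      alpha = 1 /\ beta = 1 /\ u = v,
      ~ bipartite e /\ alpha = 0 /\ beta < 1
    | alpha = 0 /\ beta = 0 /\ exists n : nat, ~~ odd n /\ walk_len e u v n].
Proof.
have both : alpha < 1 -> (0 < alpha \/ ~ bipartite e) -> beta < 1 ->
    (0 < beta \/ ~ bipartite e) -> Close.
  move=> al ha bl hb eta eta0.
  have [N1 H1] := mix_pi esym eirr econn hcard a0 a1 u al ha (eta := eta / 2) ltac:(lra).
  have [N2 H2] := mix_pi esym eirr econn hcard b0 b1 v bl hb (eta := eta / 2) ltac:(lra).
  exists (N1 + N2)%N => k Hk y.
  apply: le_trans (ler_distD (pi R e y) _ _) _.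
  rewrite [X in _ + X]distrC.
  have := H1 k (leq_trans (leq_addr _ _) Hk) y.
  have := H2 k (leq_trans (leq_addl _ _) Hk) y.
  rewrite /mu /nu; lra.
split.
- move=> hc.
  have hpos0 : forall x : R, 0 <= x -> 0 < x \/ x = 0.
    by move=> x; rewrite le_eqVlt => /orP[/eqP h|h]; [right | left].
  have hle1 : forall x : R, x <= 1 -> x = 1 \/ x < 1.
    by move=> x; rewrite le_eqVlt => /orP[/eqP h|h]; [left | right].
  have c0 : 0 < (#|V|)%:R :> R by rewrite ltr0n; apply: ltn_trans hcard.
  have [b1'|bl] := hle1 _ b1.
    have hnu : forall k y, nu k y = if y == v then 1 else 0.
      by move=> k y; rewrite /nu b1' wd_one.
    have [a1'|al] := hle1 _ a1.
      apply: Or42; split => //; split => //.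
      have [N HN] := hc (1/2) ltac:(lra).
      have := HN N (leqnn N) v; rewrite hnu eqxx /mu a1' wd_one.
      case: (v =P u) => [-> //|_]; rewrite sub0r normrN normr1 => h; exfalso; lra.
    exfalso; have [ap|a0'] := hpos0 _ a0.
      have p1 := pi_lt1 v.
      have [N1 H1] := mix_pi esym eirr econn hcard a0 a1 u al (or_introl ap)
        (eta := (1 - pi R e v) / 3) ltac:(lra).
      have [N2 H2] := hc ((1 - pi R e v) / 3) ltac:(lra).
      have := H1 (N1 + N2)%N (leq_addr _ _) v.
      have := H2 (N1 + N2)%N (leq_addl _ _) v.
      rewrite hnu eqxx /mu !ler_norml => /andP[h1 h2] /andP[h3 h4]; lra.
    have [N HN] := hc (1/4) ltac:(lra).
    have := HN N (leqnn N) v; have := HN N.+1 (leqnSn N) v.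
    have := step0 a0' N; rewrite !hnu eqxx !ler_norml => h0 /andP[h1 h2] /andP[h3 h4].
    lra.
  have [ap|a0'] := hpos0 _ a0; first by apply: Or41.
  case: (pselect (bipartite e)) => [[f hf]|nb]; last by apply: Or43.
  have [bp|b0'] := hpos0 _ b0.
    exfalso; have p0 := pi_gt0 R econn hcard u.
    have [N1 H1] := mix_pi esym eirr econn hcard b0 b1 v bl (or_introl bp)
      (eta := pi R e u / 3) ltac:(lra).
    have [N2 H2] := hc (pi R e u / 3) ltac:(lra).
    pose k := (N1 + N2).*2.+1.
    have hmu : mu k u = 0.
      apply/eqP; apply/negPn/negP => h.
      have := wd_support a0' hf h; rewrite /k /= odd_double.
      by case: (f u).
    have := H1 k ltac:(rewrite /k; lia) u.
    have := H2 k ltac:(rewrite /k; lia) u.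
    rewrite hmu /nu !ler_norml => /andP[h1 h2] /andP[h3 h4]; lra.
  case: (eqVneq (f u) (f v)) => fuv.
    apply: Or44; split => //; split => //.
    have [n hn] := econn u v; exists n; split => //.
    have := wl_parity hf hn; rewrite fuv.
    by case: (odd n); case: (f v).
  exfalso.
  have [N HN] := hc (1 / (2 * (#|V|)%:R)) ltac:(apply: divr_gt0; lra).
  have hge : 1 <= \sum_y `|mu N y - nu N y|.
    rewrite -(mu_sum N); apply: ler_sum => y _.
    have [m0|m0] := eqVneq (mu N y) 0; first by rewrite m0 normr_ge0.
    have -> : nu N y = 0.
      apply/eqP; apply/negPn/negP => h.
      have := wd_support b0' hf h; have := wd_support a0' hf m0.
      move=> ->; move: fuv; case: (f u); case: (f v); case: (odd N) => //.
    by rewrite subr0 ger0_norm // mu_ge0.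
  have hle : \sum_y `|mu N y - nu N y| <= \sum_(y : V) (1 / (2 * (#|V|)%:R)).
    by apply: ler_sum => y _; apply: HN.
  have hs : forall c : R, \sum_(y : V) c = c * (#|V|)%:R.
    by move=> c; rewrite sumr_const mulr_natr.
  move: hle; rewrite hs.
  have -> : 1 / (2 * (#|V|)%:R) * (#|V|)%:R = 1 / 2 :> R.
    by field; rewrite gt_eqF.
  lra.
- case.
  + move=> [ap bl]; have al : alpha < 1 := le_lt_trans ab bl.
    have bp : 0 < beta := lt_le_trans ap ab.
    by apply: both => //; left.
  + move=> [ha [hb huv]] eta eta0; exists 0%N => k _ y.
    by rewrite /mu /nu ha hb huv subrr normr0 ltW.
  + move=> [nb [ha bl]]; apply: both => //; rewrite ?ha ?ltr01 //; by right.
  + move=> [ha [hb [n [hn hw]]]].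
    case: (pselect (bipartite e)) => [[f hf]|nb].
      have fuv : f u = f v by rewrite (wl_parity hf hw) (negbTE hn) addbF.
      move=> eta eta0.
      have [N HN] := mix_bip esym econn hcard b0 b1 hb hf fuv eta0.
      exists N => k Hk y; rewrite /mu /nu ha -hb; exact: HN.
    by apply: both; rewrite ?ha ?hb ?ltr01 //; right.
Qed.
End Main.

Theorem theorem3p4 (R : realType) (V : finType) (e : rel V)
  (u v : V) (alpha beta : R) :
  simple_graph e -> connected_graph e -> (1 < #|V|)%N ->
  0 <= alpha -> alpha <= beta -> beta <= 1 ->
  ((fun k : nat => wasserstein e (walk_dist e alpha u k) (walk_dist e beta v k))
     @ \oo --> (0 : R))
  <->
  [\/ 0 < alpha /\ beta < 1,
      alpha = 1 /\ beta = 1 /\ u = v,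
      ~ bipartite e /\ alpha = 0 /\ beta < 1
    | alpha = 0 /\ beta = 0 /\ exists n : nat, ~~ odd n /\ walk_len e u v n].
Proof.
move=> [hsym hirr] hconn hcard a0 ab b1.
have H := main_equiv hsym hirr hconn hcard u v a0 ab b1.
split.
  by move=> hw; apply/H; apply: (W_close hconn hcard a0 ab b1).
by move=> hd; apply: (close_W hconn hcard a0 ab b1); apply/H.
Qed.
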